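(* Let $r\ge3$, $n>r$ and $1<i<r$. Let $M=(E_{r-1}E_{r-2}\cdots E_1)(E_{r+1}E_{r+2}\cdots E_n)1_\omega\in T$. Then $(vF_{i-1}E_{i-1}-1)M=M(vF_iE_i-1)$ in $T$.
   Context: $T$ is the $\mathbb{Q}(v)$-algebra with generators $E_i,F_i,K_i^{\pm1}$ ($1\le i\le n$, indices mod $n$) and relations: $K_iK_j=K_jK_i$; $K_iK_i^{-1}=K_i^{-1}K_i=1$; $K_iE_j=v^{\epsilon^+(i,j)}E_jK_i$; $K_iF_j=v^{-\epsilon^+(i,j)}F_jK_i$ ($\epsilon^+(i,j)=1$ if $j=i$, $-1$ if $j\equiv i-1\pmod n$, $0$ otherwise); $E_iF_j-F_jE_i=\delta_{ij}\frac{K_iK_{i+1}^{-1}-K_i^{-1}K_{i+1}}{v-v^{-1}}$; $E_iE_j=E_jE_i$, $F_iF_j=F_jF_i$ if $i-j\not\equiv\pm1$; $E_i^2E_j-(v+v^{-1})E_iE_jE_i+E_jE_i^2=0$, $F_i^2F_j-(v+v^{-1})F_iF_jF_i+F_jF_i^2=0$ if $i-j\equiv\pm1\pmod n$; $K_1\cdots K_n=v^r$; $\prod_{j=0}^r(K_i-v^j)=0$. For a composition $\lambda$ of $r$ into $n$ nonnegative parts, $1_\lambda=\prod_{i=1}^n\prod_{s=1}^{\lambda_i}\frac{K_iv^{-s+1}-K_i^{-1}v^{s-1}}{v^s-v^{-s}}$; $\omega=(1,\dots,1,0,\dots,0)$ with $r$ ones and $n-r$ zeros. *)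

(* Defs.v *)
From HB Require Import structures.
From mathcomp Require Import all_boot all_order all_algebra.
Set Implicit Arguments. Unset Strict Implicit. Unset Printing Implicit Defensive.
Import Order.TTheory GRing.Theory Num.Theory.
Local Open Scope ring_scope.

Definition Qv : fieldType := {fraction {poly rat}}.
Definition vq : Qv := tofrac 'X.

(* Indices are natural numbers read modulo n (index n = index 0). *)
Definition epsp (n i j : nat) : int :=
  if j == i %[mod n] then 1 else if j.+1 == i %[mod n] then -1 else 0.

(* T is the algebra presented by
   these generators and relations, i.e. the initial such algebra. *)
Definition T_relations (n r : nat) (A : algType Qv)
    (E F K Kinv : nat -> A) : Prop :=
  (
      (forall i, E (i + n)%N = E i /\ F (i + n)%N = F i /\
                 K (i + n)%N = K i /\ Kinv (i + n)%N = Kinv i) /\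
      (forall i j, K i * K j = K j * K i) /\
      (forall i, K i * Kinv i = 1 /\ Kinv i * K i = 1) /\
      (forall i j, K i * E j = (vq ^ epsp n i j) *: (E j * K i)) /\
      (forall i j, K i * F j = (vq ^ (- epsp n i j)) *: (F j * K i)) /\
      (forall i j, E i * F j - F j * E i =
         if i == j %[mod n] then
           (vq - vq^-1)^-1 *: (K i * Kinv i.+1 - Kinv i * K i.+1)
         else 0) /\
      (forall i j, ~~ (i == j.+1 %[mod n]) -> ~~ (j == i.+1 %[mod n]) ->
         E i * E j = E j * E i /\ F i * F j = F j * F i) /\
      (forall i j, (i == j.+1 %[mod n]) || (j == i.+1 %[mod n]) ->
         E i ^+ 2 * E j - (vq + vq^-1) *: (E i * E j * E i) + E j * E i ^+ 2 = 0
         /\ F i ^+ 2 * F j - (vq + vq^-1) *: (F i * F j * F i) + F j * F i ^+ 2 = 0) /\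
      \prod_(1 <= i < n.+1) K i = (vq ^+ r)%:A /\
      (forall i, \prod_(0 <= j < r.+1) (K i - (vq ^+ j)%:A) = 0)).

Definition one_lam (n : nat) (A : algType Qv) (K Kinv : nat -> A)
    (lam : nat -> nat) : A :=
  \prod_(1 <= i < n.+1) \prod_(1 <= s < (lam i).+1)
     ((vq ^+ s - vq ^- s)^-1 *:
        (vq ^ (1 - (s%:Z)) *: K i - vq ^ ((s%:Z) - 1) *: Kinv i)).

Definition omega (r : nat) (i : nat) : nat := if (1 <= i <= r)%N then 1%N else 0%N.

(* Main.v *)
Require Import Defs.
From HB Require Import structures.
From mathcomp Require Import all_boot all_order all_algebra.
From mathcomp Require Import zify ring.
Import GRing.Theory.
Local Open Scope ring_scope.


Lemma vq_neq0 : vq != 0.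
Proof. by rewrite /vq tofrac_eq0 polyX_eq0. Qed.

Lemma vqX_inj (p q : nat) : vq ^+ p = vq ^+ q -> p = q.
Proof.
rewrite /vq -!tofracXn => /eqP; rewrite tofrac_eq => /eqP h.
by have := congr1 (fun p : {poly rat} => size p) h; rewrite /= !size_polyXn => -[].
Qed.

Lemma vqXn1 (d : nat) : (0 < d)%N -> vq ^+ d != 1.
Proof. by move=> d0; apply/eqP; rewrite -(expr0 vq) => /vqX_inj; case: d d0. Qed.

Lemma vqX_neq0 (d : nat) : vq ^+ d != 0.
Proof. by rewrite expf_neq0 // vq_neq0. Qed.

Lemma comm_scale (A : algType Qv) (x y : A) c :
  GRing.comm x y -> GRing.comm x (c *: y).
Proof. by rewrite /GRing.comm => h; rewrite -scalerAr h scalerAl. Qed.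

Lemma comm_prodB (A : algType Qv) (X : nat -> A)
  (HX : forall j k, X j * X k = X k * X j) j l c (s : nat -> Qv) :
  GRing.comm (X j) (\prod_(k < c) (X l - (s k)%:A)).
Proof.
apply: commr_prod => k _; apply: commrB; first exact: HX.
exact/commr_sym/comm_alg.
Qed.

Lemma comm_prod2 (A : algType Qv) (I J : Type) (r1 : seq I) (r2 : seq J)
   (F : I -> A) (G : J -> A) :
  (forall i j, GRing.comm (F i) (G j)) ->
  GRing.comm (\prod_(i <- r1) F i) (\prod_(j <- r2) G j).
Proof.
move=> h; apply: commr_prod => j _; apply/commr_sym/commr_prod => i _; exact/commr_sym/h.
Qed.

Lemma comm_lin (A : algType Qv) (X : nat -> A)
  (HX : forall j k, X j * X k = X k * X j) j l (s t : Qv) :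
  GRing.comm (X j - s%:A) (X l - t%:A).
Proof.
apply: commrB; last exact/commr_sym/comm_alg.
apply/commr_sym/commrB; first exact: HX.
exact/commr_sym/comm_alg.
Qed.

Lemma spec (A : algType Qv) (X : nat -> A)
  (HX : forall j k, X j * X k = X k * X j) :
 forall m (a b : nat -> nat) (d : nat) (y : A),
 (forall j, (j < m)%N -> (0 < b j)%N) ->
 (forall j, (j < m)%N -> (\prod_(k < b j) (X j - (vq ^+ (a j + k))%:A)) * y = 0) ->
 vq ^+ d *: ((\prod_(j < m) X j) * y) = vq ^+ (\sum_(j < m) a j)%N *: y ->
 ((0 < d)%N -> y = 0) /\ (d = 0%N -> forall j, (j < m)%N -> X j * y = vq ^+ a j *: y).
Proof.
elim=> [|m IH] a b d y Hb Hy Hd.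
  rewrite !big_ord0 mul1r expr0 scale1r in Hd.
  split=> // d0.
  have: (vq ^+ d - 1) *: y = 0 by rewrite scalerBl Hd scale1r subrr.
  move/eqP; rewrite scaler_eq0 subr_eq0 (negbTE (vqXn1 d d0)) /=.
  by move/eqP.
rewrite big_ord_recr /= big_ord_recr /= in Hd.
have commP : forall (c : nat) (s : nat -> Qv),
    GRing.comm (\prod_(j < m) X j) (\prod_(k < c) (X m - (s k)%:A)).
  move=> c s; apply: comm_prod2 => i k; apply: commrB; first exact: HX.
  exact/commr_sym/comm_alg.
have inner : forall c y d, (0 < c)%N ->
   (forall j, (j < m)%N -> (\prod_(k < b j) (X j - (vq ^+ (a j + k))%:A)) * y = 0) ->
   (\prod_(k < c) (X m - (vq ^+ (a m + k))%:A)) * y = 0 ->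
   vq ^+ d *: ((\prod_(j < m) X j) * X m * y) =
     vq ^+ (\sum_(j < m) a j + a m)%N *: y ->
   ((0 < d)%N -> y = 0) /\ (d = 0%N -> forall j, (j < m.+1)%N -> X j * y = vq ^+ a j *: y).
  elim=> [//|c IHc] y' d' _ Hy' Hc Hd'.
  case: c IHc Hc => [|c] IHc Hc.
    rewrite big_ord1 addn0 mulrBl mulr_algl in Hc.
    have HXm : X m * y' = vq ^+ a m *: y' by apply/eqP; rewrite -subr_eq0 Hc.
    rewrite -mulrA HXm -scalerAr scalerA mulrC -scalerA addnC exprD -scalerA in Hd'.
    have {}Hd' := scalerI (vqX_neq0 _) Hd'.
    have [H1 H2] := IH a b d' y' (fun j hj => Hb j (ltn_trans hj (ltnSn _))) Hy' Hd'.
    split=> // d0 j; rewrite ltnS leq_eqVlt => /orP[/eqP->//|hj].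
    exact: H2.
  set Q := \prod_(k < c.+1) (X m - (vq ^+ (a m + k))%:A).
  set u := Q * y'.
  have Hu : X m * u = vq ^+ (a m + c.+1) *: u.
    apply/eqP; rewrite -subr_eq0 -mulr_algl -mulrBl /u mulrA.
    have -> : (X m - (vq ^+ (a m + c.+1))%:A) * Q = Q * (X m - (vq ^+ (a m + c.+1))%:A).
      apply: commr_prod => k _; apply: commrB; last exact/commr_sym/comm_alg.
      apply/commr_sym/commrB; first exact: commr_refl.
      exact/commr_sym/comm_alg.
    have e : \prod_(k < c.+2) (X m - (vq ^+ (a m + k))%:A) =
       Q * (X m - (vq ^+ (a m + c.+1))%:A) by rewrite big_ord_recr.
    by rewrite -e Hc.
  have Hyu : forall j, (j < m)%N -> (\prod_(k < b j) (X j - (vq ^+ (a j + k))%:A)) * u = 0.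
    move=> j hj; rewrite /u mulrA.
    have -> : \prod_(k < b j) (X j - (vq ^+ (a j + k))%:A) * Q =
              Q * \prod_(k < b j) (X j - (vq ^+ (a j + k))%:A).
      apply: comm_prod2 => k l; exact: comm_lin.
    by rewrite -mulrA Hy' // mulr0.
  have Hrel : vq ^+ (d' + c.+1) *: ((\prod_(j < m) X j) * u) =
              vq ^+ (\sum_(j < m) a j) *: u.
    have := congr1 (fun z => Q * z) Hd'; rewrite /= -!scalerAr.
    have -> : Q * (\prod_(j < m) X j * X m * y') = \prod_(j < m) X j * (X m * u).
      rewrite /u !mulrA; congr (_ * y').
      have cQ1 : GRing.comm Q (\prod_(j < m) X j) := commr_sym (commP c.+1 (fun k => vq ^+ (a m + k))).
      have cQ2 : GRing.comm Q (X m) := commr_sym (@comm_prodB A X HX m m c.+1 (fun k => vq ^+ (a m + k))).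
      by rewrite -mulrA (commrM cQ1 cQ2).
    rewrite Hu -scalerAr => h.
    apply: (scalerI (vqX_neq0 (a m))); rewrite scalerA -exprD addnCA.
    rewrite scalerA -exprD in h; rewrite h.
    by rewrite (addnC (\sum_(j < m) a j)) exprD -scalerA.
  have [H1 _] := IH a b (d' + c.+1) u
     (fun j hj => Hb j (ltn_trans hj (ltnSn _))) Hyu Hrel.
  have u0 : u = 0 by apply: H1; exact: ltn_addl (ltn0Sn c).
  exact: IHc y' d' (ltn0Sn _) Hy' u0 Hd'.
exact: inner (b m) y d (Hb m (ltnSn m))
  (fun j hj => Hy j (ltn_trans hj (ltnSn m))) (Hy m (ltnSn m)) Hd.
Qed.


Lemma comm_inv (A : algType Qv) (x k ki : A) :
  k * ki = 1 -> ki * k = 1 -> GRing.comm x k -> GRing.comm x ki.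
Proof.
move=> h1 h2 h; rewrite /GRing.comm.
have -> : x * ki = ki * k * x * ki by rewrite h2 mul1r.
by rewrite -(mulrA ki k x) -h !mulrA -(mulrA _ k ki) h1 mulr1.
Qed.

Lemma comm_one_lam (n : nat) (A : algType Qv) (K Kinv : nat -> A) lam (x : A) :
  (forall i, K i * Kinv i = 1 /\ Kinv i * K i = 1) ->
  (forall i, GRing.comm x (K i)) -> GRing.comm x (one_lam n K Kinv lam).
Proof.
move=> hinv h; apply: commr_prod => i _; apply: commr_prod => s _.
apply: comm_scale; apply: commrB; apply: comm_scale; first exact: h.
by have [h1 h2] := hinv i; apply: comm_inv h1 h2 (h i).
Qed.

Lemma comm_factor (A : algType Qv) (K Kinv : nat -> A) (x : A) :
  (forall i, K i * Kinv i = 1 /\ Kinv i * K i = 1) ->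
  (forall i, GRing.comm x (K i)) ->
  forall i (c c1 c2 : Qv), GRing.comm x (c *: (c1 *: K i - c2 *: Kinv i)).
Proof.
move=> hinv h i c c1 c2.
apply: comm_scale; apply: commrB; apply: comm_scale; first exact: h.
by have [h1 h2] := hinv i; apply: comm_inv h1 h2 (h i).
Qed.

Lemma omega_ev (n r : nat) (A : algType Qv) (E F K Kinv : nat -> A) :
  (1 <= r <= n)%N -> T_relations n r E F K Kinv ->
  forall m, (1 <= m <= r)%N ->
  K m * one_lam n K Kinv (omega r) = vq *: one_lam n K Kinv (omega r).
Proof.
move=> /andP[r1 rn] [Hper [HKK [HKinv [HKE [HKF [HEF [Hcomm [Hserre [Hprod Hpoly]]]]]]]]].
move=> m /andP[m1 mr].
set O := one_lam n K Kinv (omega r).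
have := @spec A (fun j => K j.+1) (fun j k => HKK _ _) n
  (fun j => (j.+1 <= r)%N : nat) (fun j => (r.+1 - (j.+1 <= r))%N) 0 O.
case.
- by move=> j _; case: (j.+1 <= r)%N => /=; [rewrite subSS subn0 | rewrite subn0].
- move=> j jn /=; case hj: (j.+1 <= r)%N => /=.
  + rewrite subSS subn0.
    set Pi := \prod_(k < r) _.
    have cK : forall i, GRing.comm Pi (K i).
      move=> i; apply/commr_sym/commr_prod => k _; apply: commrB; first exact: HKK.
      exact/commr_sym/comm_alg.
    have cKi : forall i, GRing.comm Pi (Kinv i).
      by move=> i; have [h1 h2] := HKinv i; apply: comm_inv h1 h2 (cK i).
    have jr : (j.+1 < n.+1)%N by rewrite ltnS (leq_trans hj rn).
    rewrite /O /one_lam (big_cat_nat _ (n:=j.+1)) //=; last exact: ltnW.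
    have om : omega r j.+1 = 1%N by rewrite /omega /= hj.
    rewrite (big_ltn jr) om big_nat1.
    set O1 := \prod_(1 <= i < j.+1) _.
    have cO : GRing.comm Pi O1.
      apply: commr_prod => i _; apply: commr_prod => t _.
      exact: (@comm_factor A K Kinv Pi HKinv cK).
    rewrite (mulrA Pi O1) cO.
    rewrite -(mulrA O1 Pi) (mulrA Pi) -scalerAr subrr expr0z !scale1r.
    have -> : Pi * (K j.+1 - Kinv j.+1) = 0.
      have [h1 h2] := HKinv j.+1.
      have -> : K j.+1 - Kinv j.+1 = Kinv j.+1 * ((K j.+1 - 1) * (K j.+1 + 1)).
        have e : (K j.+1 - 1) * (K j.+1 + 1) = K j.+1 * K j.+1 - 1.
          by rewrite mulrBl (mulrDr (K j.+1)) mulr1 mul1r opprD addrA addrK.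
        by rewrite e mulrBr mulr1 mulrA h2 mul1r.
      rewrite (mulrA Pi) cKi -(mulrA (Kinv j.+1)) (mulrA Pi).
      have -> : Pi * (K j.+1 - 1) = \prod_(k < r.+1) (K j.+1 - (vq ^+ k)%:A).
        rewrite big_ord_recl /= expr0 scale1r.
        have -> : Pi = \prod_(i < r) (K j.+1 - (vq ^+ (lift ord0 i))%:A).
          by apply: eq_bigr => i _; rewrite lift0 add1n.
        apply: commr_sym; apply: commr_prod => i _; apply: commrB.
          by apply/commr_sym/commrB; [exact: commr_refl | exact: commr1].
        exact/commr_sym/comm_alg.
      by have := Hpoly j.+1; rewrite big_mkord => ->; rewrite mul0r mulr0.
    by rewrite scaler0 mul0r mulr0.
  + rewrite subn0 {hj}.
    have := Hpoly j.+1; rewrite big_mkord => h.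
    by rewrite (eq_bigr (fun k : 'I_r.+1 => K j.+1 - (vq ^+ k)%:A)) ?h ?mul0r.
- have e1 : \prod_(j < n) K j.+1 = \prod_(1 <= i < n.+1) K i.
    by rewrite big_add1 /= big_mkord.
  have e2 : (\sum_(j < n) (j < r : nat))%N = r.
    rewrite -(big_mkord xpredT (fun j : nat => nat_of_bool (j < r)%N)) (big_cat_nat (n:=r)) //=.
    rewrite (@eq_big_nat _ _ _ 0 r _ (fun=> 1%N)); last by move=> i /andP[_ ->].
    rewrite (@eq_big_nat _ _ _ r n _ (fun=> 0%N)); last first.
      by move=> i /andP[hi _]; rewrite ltnNge hi.
    by rewrite !sum_nat_const_nat subn0 muln1 muln0 addn0.
  by rewrite e1 Hprod e2 expr0 scale1r mulr_algl.
- move=> _ /(_ erefl m.-1) h.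
  have hm : (m.-1 < n)%N.
    by case: m m1 mr {h} => // m' _ mr; rewrite /= (leq_trans mr rn).
  by have := h hm; rewrite prednK // mr /= expr1.
Qed.


Lemma modS_small n k : (1 < n)%N -> (k <= n.+1)%N ->
  (k %% n = if (k < n)%N then k else k - n)%N.
Proof.
move=> n1 kn; case: ltnP => h; first by rewrite modn_small.
by rewrite -{1}(subnKC h) modnDl modn_small //; lia.
Qed.

Lemma eqmE n a b : (1 < n)%N -> (a <= n.+1)%N -> (b <= n.+1)%N ->
  (a == b %[mod n]) = [|| (a == b), (a + n == b)%N | (a == b + n)%N].
Proof.
move=> n1 an bn; rewrite (modS_small _ _ n1 an) (modS_small _ _ n1 bn).
case: ltnP => ha; case: ltnP => hb; apply/idP/idP; lia.
Qed.

Lemma epsp1 n m j : (j == m %[mod n]) -> epsp n m j = 1.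
Proof. by rewrite /epsp => ->. Qed.
Lemma epspN1 n m j : ~~ (j == m %[mod n]) -> (j.+1 == m %[mod n]) -> epsp n m j = -1.
Proof. by rewrite /epsp => /negbTE -> ->. Qed.
Lemma epsp0 n m j : ~~ (j == m %[mod n]) -> ~~ (j.+1 == m %[mod n]) -> epsp n m j = 0.
Proof. by rewrite /epsp => /negbTE -> /negbTE ->. Qed.


Lemma wtE (n r : nat) (A : algType Qv) (E F K Kinv : nat -> A)
  (HT : T_relations n r E F K Kinv)
  m j y t : K m * y = vq ^ t *: y ->
  K m * (E j * y) = vq ^ (epsp n m j + t) *: (E j * y).
Proof.
case: (HT) => _ [_ [_ [HKE _]]] h.
by rewrite mulrA HKE -scalerAl -mulrA h -scalerAr scalerA -expfzDr // vq_neq0.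
Qed.

Lemma wtF (n r : nat) (A : algType Qv) (E F K Kinv : nat -> A)
  (HT : T_relations n r E F K Kinv)
  m j y t : K m * y = vq ^ t *: y ->
  K m * (F j * y) = vq ^ (- epsp n m j + t) *: (F j * y).
Proof.
case: (HT) => _ [_ [_ [_ [HKF _]]]] h.
by rewrite mulrA HKF -scalerAl -mulrA h -scalerAr scalerA -expfzDr // vq_neq0.
Qed.

Lemma wtKinv (n r : nat) (A : algType Qv) (E F K Kinv : nat -> A)
  (HT : T_relations n r E F K Kinv)
  m y t : K m * y = vq ^ t *: y -> Kinv m * y = vq ^ (- t) *: y.
Proof.
case: (HT) => _ [_ [HKinv _]] h; have [h1 h2] := HKinv m.
have e : vq ^ t *: (Kinv m * y) = y by rewrite scalerAr -h mulrA h2 mul1r.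
apply: (scalerI (expfz_neq0 t vq_neq0)).
by rewrite e scalerA -expfzDr ?vq_neq0 // subrr expr0z scale1r.
Qed.

Lemma prod_eval (n r : nat) (A : algType Qv) (E F K Kinv : nat -> A)
  (HT : T_relations n r E F K Kinv)
  m (lam : Qv) y N (s : nat -> Qv) : K m * y = lam *: y ->
  (\prod_(k < N) (K m - (s k)%:A)) * y = (\prod_(k < N) (lam - s k)) *: y.
Proof.
move=> h; elim: N => [|N IH]; first by rewrite !big_ord0 mul1r scale1r.
rewrite !big_ord_recr /= -mulrA mulrBl h mulr_algl -scalerBl -scalerAr IH.
by rewrite scalerA mulrC.
Qed.

Lemma trunc (n r : nat) (A : algType Qv) (E F K Kinv : nat -> A)
  (HT : T_relations n r E F K Kinv)
  m y : K m * y = vq ^ (-1) *: y -> y = 0.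
Proof.
move=> h; case: (HT) => _ [_ [_ [_ [_ [_ [_ [_ [_ Hpoly]]]]]]]].
have := Hpoly m; rewrite big_mkord => e.
have := @prod_eval n r A E F K Kinv HT m (vq ^ (-1)) y r.+1 (fun k : nat => vq ^+ k) h.
have nz : \prod_(k < r.+1) (vq ^ (-1) - vq ^+ k) != 0.
  rewrite prodf_seq_neq0; apply/allP => k _ /=.
  rewrite exprN1 subr_eq0; apply/eqP => hk.
  have : vq * vq^-1 = vq * vq ^+ k by rewrite hk.
  by rewrite mulfV ?vq_neq0 // -exprS -(expr0 vq) => /vqX_inj.
by rewrite e mul0r => /esym/eqP; rewrite scaler_eq0 (negbTE nz) /= => /eqP.
Qed.

Lemma commEF (n r : nat) (A : algType Qv) (E F K Kinv : nat -> A)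
  (HT : T_relations n r E F K Kinv)
  p y s t : K p * y = vq ^ s *: y -> K p.+1 * y = vq ^ t *: y ->
  E p * (F p * y) - F p * (E p * y) =
  ((vq - vq^-1)^-1 * (vq ^ (s - t) - vq ^ (t - s))) *: y.
Proof.
move=> hs ht; case: (HT) => _ [_ [HKinv [_ [_ [HEF _]]]]].
rewrite !mulrA -mulrBl HEF eqxx -scalerAl -scalerA; congr (_ *: _).
rewrite mulrBl -!mulrA (@wtKinv n r A E F K Kinv HT _ _ _ ht) ht -!scalerAr hs (@wtKinv n r A E F K Kinv HT _ _ _ hs) !scalerA.
by rewrite -!expfzDr ?vq_neq0 // -scalerBl (addrC (- t)).
Qed.

Lemma EFcomm (n r : nat) (A : algType Qv) (E F K Kinv : nat -> A)
  (HT : T_relations n r E F K Kinv)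
  i j : ~~ (i == j %[mod n]) -> E i * F j = F j * E i.
Proof.
case: (HT) => _ [_ [_ [_ [_ [HEF _]]]]] h.
by apply/eqP; rewrite -subr_eq0 HEF (negbTE h).
Qed.

Lemma EEcomm (n r : nat) (A : algType Qv) (E F K Kinv : nat -> A)
  (HT : T_relations n r E F K Kinv)
  i j : ~~ (i == j.+1 %[mod n]) -> ~~ (j == i.+1 %[mod n]) ->
  E i * E j = E j * E i.
Proof. case: (HT) => _ [_ [_ [_ [_ [_ [Hc _]]]]]] h1 h2; by case: (Hc i j h1 h2). Qed.

Lemma serre (n r : nat) (A : algType Qv) (E F K Kinv : nat -> A)
  (HT : T_relations n r E F K Kinv)
  i j : (i == j.+1 %[mod n]) ->
  (vq + vq^-1) *: (E i * E j * E i) = E i ^+ 2 * E j + E j * E i ^+ 2.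
Proof.
case: (HT) => _ [_ [_ [_ [_ [_ [_ [Hs _]]]]]]] h.
have [e _] := Hs i j (introT orP (or_introl h)).
have e2 : E i ^+ 2 * E j + E j * E i ^+ 2 - (vq + vq^-1) *: (E i * E j * E i) = 0.
  by rewrite -e addrAC.
by apply/eqP; rewrite eq_sym -subr_eq0 e2.
Qed.



Lemma vqv_neq0 : vq - vq^-1 != 0.
Proof.
rewrite subr_eq0; apply/eqP => h.
have : vq * vq = vq * vq^-1 by rewrite -h.
by rewrite mulfV ?vq_neq0 // -expr2 -(expr0 vq) => /vqX_inj.
Qed.

Lemma vqp_neq0 : vq + vq^-1 != 0.
Proof.
apply/eqP => h.
have : vq * (vq + vq^-1) = 0 by rewrite h mulr0.
rewrite mulrDr mulfV ?vq_neq0 // -expr2 /vq -tofracXn -tofrac1 -tofracD.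
move/eqP; rewrite tofrac_eq0 => /eqP h2.
have := congr1 (fun q : {poly rat} => q.[0]) h2; rewrite /= !hornerE /=.
by move/eqP; rewrite oner_eq0.
Qed.

Lemma sc_m1 : (vq - vq^-1)^-1 * (vq ^ ((0:int) - 1) - vq ^ ((1:int) - 0)) = -1.
Proof.
have -> : ((0:int) - 1) = -1 by []. have -> : ((1:int) - 0) = 1 by [].
rewrite exprN1 -exprnP expr1 -(opprB vq) mulrN mulVf ?vqv_neq0 //.
Qed.

Lemma sc_2 : (vq - vq^-1)^-1 * (vq ^ ((2:int) - 0) - vq ^ ((0:int) - 2)) = vq + vq^-1.
Proof.
have -> : ((2:int) - 0) = 2%N by []. have -> : ((0:int) - 2) = - (2%N : int) by [].
rewrite -invr_expz -!exprnP.
have -> : vq ^+ 2 - (vq ^+ 2)^-1 = (vq - vq^-1) * (vq + vq^-1).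
  rewrite -exprVn; set w := vq^-1.
  have hw : vq * w = 1 by rewrite mulfV ?vq_neq0.
  rewrite mulrDr !mulrBl hw (mulrC w vq) hw. ring.
by rewrite mulrA mulVf ?vqv_neq0 // mul1r.
Qed.

Lemma chain_wt n r (A : algType Qv) (E F K Kinv : nat -> A)
  (HT : T_relations n r E F K Kinv) m t y (s : seq nat) (f : nat -> nat) :
  (forall j, j \in s -> epsp n m (f j) = 0) -> K m * y = vq ^ t *: y ->
  K m * ((\prod_(j <- s) E (f j)) * y) = vq ^ t *: ((\prod_(j <- s) E (f j)) * y).
Proof.
elim: s => [|j s IH] h hy; first by rewrite big_nil mul1r.
rewrite big_cons -mulrA (@wtE _ _ _ _ _ _ _ HT _ _ _ _ (IH (fun k hk => h k (@mem_behead _ (j :: s) k hk)) hy)).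
by rewrite h ?mem_head // add0r.
Qed.

Lemma key n r (A : algType Qv) (E F K Kinv : nat -> A)
  (HT : T_relations n r E F K Kinv) p x :
  epsp n p.+1 p = -1 -> epsp n p.+2 p.+1 = -1 -> epsp n p.+2 p = 0 ->
  epsp n p p.+1 = 0 ->
  ~~ (p.+1 == p %[mod n]) -> ~~ (p == p.+1 %[mod n]) ->
  K p * x = vq ^ (0:int) *: x -> K p.+1 * x = vq ^ (1:int) *: x ->
  K p.+2 * x = vq ^ (1:int) *: x ->
  F p * (E p * (E p.+1 * (E p * x))) = E p.+1 * (E p * (F p.+1 * (E p.+1 * x))).
Proof.
move=> e10 e21 e20 e01 n10 n01 hx0 hx1 hx2.
have ep : forall k, epsp n k k = 1 by move=> k; apply: epsp1.
have wE := @wtE _ _ _ _ _ _ _ HT; have wF := @wtF _ _ _ _ _ _ _ HT.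
have cEF := @commEF _ _ _ _ _ _ _ HT.
have tr := @trunc _ _ _ _ _ _ _ HT.
have EFc := @EFcomm _ _ _ _ _ _ _ HT.
have Fx0 : F p * x = 0.
  by apply: (tr p); rewrite (wF _ _ _ _ hx0) ep.
have ha0 : K p * (E p * x) = vq ^ (1:int) *: (E p * x) by rewrite (wE _ _ _ _ hx0) ep.
have ha1 : K p.+1 * (E p * x) = vq ^ (0:int) *: (E p * x) by rewrite (wE _ _ _ _ hx1) e10.
have Fax : F p * (E p * x) = x.
  have := cEF _ _ _ _ hx0 hx1; rewrite sc_m1 Fx0 mulr0 sub0r scaleN1r.
  by move/eqP; rewrite eqr_opp => /eqP.
have hba0 : K p * (E p.+1 * (E p * x)) = vq ^ (1:int) *: (E p.+1 * (E p * x)).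
  by rewrite (wE _ _ _ _ ha0) e01.
have hba1 : K p.+1 * (E p.+1 * (E p * x)) = vq ^ (1:int) *: (E p.+1 * (E p * x)).
  by rewrite (wE _ _ _ _ ha1) ep.
have L : F p * (E p * (E p.+1 * (E p * x))) = E p * (E p.+1 * x).
  have := cEF _ _ _ _ hba0 hba1; rewrite subrr mulr0 scale0r => /eqP.
  rewrite subr_eq0 => /eqP <-.
  by rewrite (mulrA (F p)) -(EFc _ _ n10) -mulrA Fax.
rewrite L.
have hfb : E p.+1 * (F p.+1 * x) = F p.+1 * (E p.+1 * x).
  have := cEF _ _ _ _ hx1 hx2; rewrite subrr mulr0 scale0r => /eqP.
  by rewrite subr_eq0 => /eqP.
rewrite -hfb.
set z := F p.+1 * x.
have hS := @serre _ _ _ _ _ _ _ HT p.+1 p (eqxx _).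
have e1 : E p.+1 * (E p * (E p.+1 * z)) = (vq + vq^-1)^-1 *: ((vq + vq^-1) *: (E p.+1 * E p * E p.+1 * z)).
  by rewrite scalerA mulVf ?vqp_neq0 // scale1r !mulrA.
rewrite e1 (scalerAl _ (E p.+1 * E p * E p.+1)) hS mulrDl.
have az0 : E p * z = 0.
  rewrite /z mulrA (EFc _ _ n01) -mulrA.
  by apply: (tr p.+1); rewrite (wF _ _ _ _ ha1) ep.
have hbx1 : K p.+1 * (E p.+1 * x) = vq ^ (2:int) *: (E p.+1 * x).
  by rewrite (wE _ _ _ _ hx1) ep.
have hbx2 : K p.+2 * (E p.+1 * x) = vq ^ (0:int) *: (E p.+1 * x).
  by rewrite (wE _ _ _ _ hx2) e21.
have bbx : E p.+1 * (E p.+1 * x) = 0.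
  by apply: (tr p.+2); rewrite (wE _ _ _ _ hbx2) e21.
have bbz : E p.+1 * (E p.+1 * z) = (vq + vq^-1) *: (E p.+1 * x).
  rewrite /z hfb; have := cEF _ _ _ _ hbx1 hbx2; rewrite sc_2 bbx mulr0 subr0.
  done.
by rewrite !expr2 -!mulrA az0 !mulr0 add0r bbz -scalerAr scalerA mulVf ?vqp_neq0 // scale1r.
Qed.


Lemma comm_FE_K n r (A : algType Qv) (E F K Kinv : nat -> A)
  (HT : T_relations n r E F K Kinv) i j :
  GRing.comm (F j * E j) (K i).
Proof.
case: (HT) => _ [_ [_ [HKE [HKF _]]]].
rewrite /GRing.comm; apply: esym.
rewrite mulrA HKF -scalerAl -(mulrA (F j) (K i)) HKE -scalerAr scalerA (mulrA (F j)).
by rewrite -expfzDr ?vq_neq0 // addNr expr0z scale1r.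
Qed.

Theorem lemma2p3p6 (r n i : nat) :
  (3 <= r)%N -> (r < n)%N -> (1 < i < r)%N ->
  forall (A : algType Qv) (E F K Kinv : nat -> A),
  T_relations n r E F K Kinv ->
  let M := (\prod_(0 <= j < r.-1) E (r.-1 - j)%N) *
           (\prod_(r.+1 <= j < n.+1) E j) * one_lam n K Kinv (omega r) in
  (vq *: (F i.-1 * E i.-1) - 1) * M = M * (vq *: (F i * E i) - 1).
Proof.
move=> r3 rn /andP[i1 ir] A E F K Kinv HT M; rewrite /M {M}.
have n1 : (1 < n)%N by lia.
have HO := @omega_ev n r A E F K Kinv (introT andP (conj (leq_trans (isT : (1 <= 3)%N) r3) (ltnW rn))) HT.
case: i i1 ir => [//|p] p1 pr.
have [r' hr] : exists r', r = r'.+1 by exists r.-1; rewrite prednK // (leq_trans _ r3).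
subst r => /=.
have wE := @wtE _ _ _ _ _ _ _ HT.
have cEF := @EFcomm _ _ _ _ _ _ _ HT.
have cEE := @EEcomm _ _ _ _ _ _ _ HT.
set O := one_lam n K Kinv (omega r'.+1).
set Q := \prod_(r'.+2 <= j < n.+1) E j.
set q := (r' - p.+1)%N.
set Phi := \prod_(0 <= j < q) E (r' - j)%N.
set Plo := \prod_(q.+2 <= j < r') E (r' - j)%N.
have eP : \prod_(0 <= j < r') E (r' - j)%N = Phi * (E p.+1 * (E p * Plo)).
  rewrite (big_cat_nat (n:=q)) //=; last by rewrite /q; lia.
  rewrite (@big_ltn _ _ _ q r'); last by rewrite /q; lia.
  rewrite (@big_ltn _ _ _ q.+1 r'); last by rewrite /q; lia.
  have -> : (r' - q = p.+1)%N by rewrite /q; lia.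
  by have -> : (r' - q.+1 = p)%N by rewrite /q; lia.
rewrite eP.
set x := Plo * (Q * O).
have HKinv : forall i, K i * Kinv i = 1 /\ Kinv i * K i = 1.
  by case: (HT) => _ [_ [H _]].
have hO : forall m, (1 <= m <= r'.+1)%N -> K m * O = vq ^ (1:int) *: O.
  by move=> m hm; rewrite HO // -exprnP expr1.
have wQ : forall m, (2 <= m <= r'.+1)%N -> K m * (Q * O) = vq ^ (1:int) *: (Q * O).
  move=> m hm.
  apply: (@chain_wt _ _ _ _ _ _ _ HT m _ _ (index_iota r'.+2 n.+1) (fun j => j)).
    move=> j; rewrite mem_index_iota => hj; apply: epsp0; rewrite eqmE; lia.
  by apply: hO; lia.
have wPlo : forall m t y, (p.+1 <= m <= p.+2)%N -> K m * y = vq ^ t *: y ->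
    K m * (Plo * y) = vq ^ t *: (Plo * y).
  move=> m t y hm hy.
  apply: (@chain_wt _ _ _ _ _ _ _ HT m _ _ (index_iota q.+2 r') (fun j => r' - j)%N) => //.
  move=> j; rewrite mem_index_iota /q => hj; apply: epsp0; rewrite eqmE; lia.
have wx1 : K p.+1 * x = vq ^ (1:int) *: x.
  by apply: wPlo; [lia | apply: wQ; lia].
have wx2 : K p.+2 * x = vq ^ (1:int) *: x.
  by apply: wPlo; [lia | apply: wQ; lia].
have wx0 : K p * x = vq ^ (0:int) *: x.
  case: (ltnP 1 p) => hp.
    have eP2 : Plo = E (p - 1)%N * \prod_(q.+3 <= j < r') E (r' - j)%N.
      rewrite /Plo (@big_ltn _ _ _ q.+2 r'); last by rewrite /q; lia.
      by have -> : (r' - q.+2 = p - 1)%N by rewrite /q; lia.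
    have eL : K p * (\prod_(q.+3 <= j < r') E (r' - j)%N * (Q * O)) =
              vq ^ (1:int) *: (\prod_(q.+3 <= j < r') E (r' - j)%N * (Q * O)).
      apply: (@chain_wt _ _ _ _ _ _ _ HT p _ _ (index_iota q.+3 r') (fun j => r' - j)%N).
        move=> j; rewrite mem_index_iota /q => hj; apply: epsp0; rewrite eqmE; lia.
      apply: (@chain_wt _ _ _ _ _ _ _ HT p _ _ (index_iota r'.+2 n.+1) (fun j => j)).
        move=> j; rewrite mem_index_iota => hj; apply: epsp0; rewrite eqmE; lia.
      by apply: hO; lia.
    have e : epsp n p (p - 1)%N = -1 by apply: epspN1; rewrite eqmE; lia.
    by rewrite /x eP2 -mulrA (wE _ _ _ _ eL) e.
  have p1e : p = 1%N by lia.
  have ePlo : Plo = 1 by rewrite /Plo big_geq // /q; lia.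
  have eQ2 : Q = \prod_(r'.+2 <= j < n) E j * E n by rewrite /Q (big_nat_recr n r'.+2).
  rewrite /x ePlo mul1r eQ2 -mulrA.
  have e : epsp n p n = -1 by apply: epspN1; rewrite eqmE; lia.
  have w1 : K p * (E n * O) = vq ^ (0:int) *: (E n * O).
    by rewrite (wE _ _ _ _ (hO p _)) ?e //; lia.
  apply: (@chain_wt _ _ _ _ _ _ _ HT p _ _ (index_iota r'.+2 n) (fun j => j)) => //.
  move=> j; rewrite mem_index_iota => hj; apply: epsp0; rewrite eqmE; lia.
have e10 : epsp n p.+1 p = -1 by apply: epspN1; rewrite eqmE; lia.
have e21 : epsp n p.+2 p.+1 = -1 by apply: epspN1; rewrite eqmE; lia.
have e20 : epsp n p.+2 p = 0 by apply: epsp0; rewrite eqmE; lia.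
have e01 : epsp n p p.+1 = 0 by apply: epsp0; rewrite eqmE; lia.
have n10 : ~~ (p.+1 == p %[mod n]) by rewrite eqmE; lia.
have n01 : ~~ (p == p.+1 %[mod n]) by rewrite eqmE; lia.
have Hkey := @key _ _ _ _ _ _ _ HT p x e10 e21 e20 e01 n10 n01 wx0 wx1 wx2.
have cPhi : GRing.comm (F p * E p) Phi.
  rewrite /Phi big_seq; apply: commr_prod => j; rewrite mem_index_iota /q => hj.
  apply/commr_sym/commrM.
    by apply: cEF; rewrite eqmE; lia.
  by apply: cEE; rewrite eqmE; lia.
have cx : GRing.comm (F p.+1 * E p.+1) x.
  rewrite /x; apply: commrM; [|apply: commrM].
  - rewrite /Plo big_seq; apply: commr_prod => j; rewrite mem_index_iota /q => hj.
    apply/commr_sym/commrM.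
      by apply: cEF; rewrite eqmE; lia.
    by apply: cEE; rewrite eqmE; lia.
  - rewrite /Q big_seq; apply: commr_prod => j; rewrite mem_index_iota => hj.
    apply/commr_sym/commrM.
      by apply: cEF; rewrite eqmE; lia.
    by apply: cEE; rewrite eqmE; lia.
  - exact: (@comm_one_lam n A K Kinv (omega r'.+1) _ HKinv (fun i => @comm_FE_K _ _ _ _ _ _ _ HT i p.+1)).
have eM : Phi * (E p.+1 * (E p * Plo)) * Q * O = Phi * (E p.+1 * (E p * x)).
  by rewrite /x !mulrA.
rewrite eM mulrBl mulrBr mul1r mulr1; congr (_ - _).
rewrite -scalerAl -scalerAr; congr (_ *: _).
rewrite (mulrA (F p * E p) Phi) cPhi -(mulrA Phi).
rewrite -(mulrA Phi) -(mulrA (E p.+1)) -(mulrA (E p)) -cx.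
congr (Phi * _).
by rewrite -(mulrA (F p)) -(mulrA (F p.+1)).
Qed.
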